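(* Consider the compact finite difference scheme (defined in the context) for the one-dimensional two-sided space fractional diffusion problem with $1<\alpha\le 2$ and diffusion coefficients $K_1,K_2\ge 0$, $K_1^2+K_2^2\neq0$. If $(p,q)=(1,0)$, the scheme is unconditionally stable for all $1<\alpha\le2$; if $(p,q)=(1,-1)$, the scheme is unconditionally stable for all $\frac{1+\sqrt{73}}{6}\le\alpha\le2$.
   Context: Problem: $\partial_t u=K_1\,{}_aD_x^\alpha u+K_2\,{}_xD_b^\alpha u+f(x,t)$ on $(a,b)\times(0,T]$, $u(x,0)=u_0(x)$, $u(a,t)=\phi_a(t)$, $u(b,t)=\phi_b(t)$, where ${}_aD_x^\alpha u(x)=\frac{1}{\Gamma(2-\alpha)}\frac{d^2}{dx^2}\int_a^x\frac{u(\xi)}{(x-\xi)^{\alpha-1}}d\xi$ and ${}_xD_b^\alpha u(x)=\frac{1}{\Gamma(2-\alpha)}\frac{d^2}{dx^2}\int_x^b\frac{u(\xi)}{(\xi-x)^{\alpha-1}}d\xi$ for $1<\alpha<2$ (both equal $u''$ for $\alpha=2$); $\phi_a\equiv0$ if $K_1\ne0$ and $\phi_b\equiv0$ if $K_2\ne0$. Grid: $h=(b-a)/N$, $\tau=T/M$, $x_i=a+ih$, $t_n=n\tau$. Let $g_k^{(\alpha)}=(-1)^k\binom{\alpha}{k}$. Weights: for $(p,q)=(1,0)$, $w_0^{(\alpha)}=\frac{\alpha}{2}g_0^{(\alpha)}$, $w_k^{(\alpha)}=\frac{\alpha}{2}g_k^{(\alpha)}+\frac{2-\alpha}{2}g_{k-1}^{(\alpha)}$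 ($k\ge1$); for $(p,q)=(1,-1)$, $w_0^{(\alpha)}=\frac{2+\alpha}{4}g_0^{(\alpha)}$, $w_1^{(\alpha)}=\frac{2+\alpha}{4}g_1^{(\alpha)}$, $w_k^{(\alpha)}=\frac{2+\alpha}{4}g_k^{(\alpha)}+\frac{2-\alpha}{4}g_{k-2}^{(\alpha)}$ ($k\ge2$). Let $c=c^\alpha_{1,0,2}=\frac{7\alpha-3\alpha^2}{24}$ if $(p,q)=(1,0)$ and $c=c^\alpha_{1,-1,2}=\frac{\alpha-3\alpha^2+12}{24}$ if $(p,q)=(1,-1)$. For a grid function $V$, $\mathcal{C}_xV_i=V_i+c(V_{i-1}-2V_i+V_{i+1})$. The scheme: for $1\le i\le N-1$, $0\le n\le M-1$, $\mathcal{C}_xU_i^{n+1}-\frac{K_1\tau}{2h^\alpha}\sum_{k=0}^{i+1}w_k^{(\alpha)}U^{n+1}_{i-k+1}-\frac{K_2\tau}{2h^\alpha}\sum_{k=0}^{N-i+1}w_k^{(\alpha)}U^{n+1}_{i+k-1}=\mathcal{C}_xU_i^{n}+\frac{K_1\tau}{2h^\alpha}\sum_{k=0}^{i+1}w_k^{(\alpha)}U^{n}_{i-k+1}+\frac{K_2\tau}{2h^\alpha}\sum_{k=0}^{N-i+1}w_k^{(\alpha)}U^{n}_{i+k-1}+\tau\,\mathcal{C}_xf_i^{n+1/2}$, with $f_i^{n+1/2}=f(x_i,t_n+\tau/2)$, $U_0^n=\phi_a(t_n)$, $U_N^n=\phi_b(t_n)$, $U_i^0=u_0(x_i)$. In matrix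 form on the interior unknowns $U^n=(U^n_1,\dots,U^n_{N-1})^T$ it reads $(C_\alpha-D_\alpha)U^{n+1}=(C_\alpha+D_\alpha)U^n+(\text{terms from }f\text{ and boundary values})$, where $C_\alpha=I_{N-1}+c\,\mathrm{tridiag}(1,-2,1)$, $D_\alpha=\frac{\tau}{2h^\alpha}(K_1A_\alpha+K_2A_\alpha^T)$ and $A_\alpha$ is the $(N-1)\times(N-1)$ matrix with $(A_\alpha)_{ij}=w^{(\alpha)}_{i-j+1}$ if $i-j+1\ge0$ and $0$ otherwise. Unconditionally stable means: for every $\tau>0$ and every $N\ge2$, $C_\alpha-D_\alpha$ is invertible and the spectral radius of $(C_\alpha-D_\alpha)^{-1}(C_\alpha+D_\alpha)$ is less than $1$. *)

(* Defs.v *)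
From HB Require Import structures.
From mathcomp Require Import all_boot all_order all_algebra.
From mathcomp Require Import complex.
From mathcomp Require Import boolp classical_sets reals exp.
Set Implicit Arguments. Unset Strict Implicit. Unset Printing Implicit Defensive.
Import Order.TTheory GRing.Theory Num.Theory.
Local Open Scope ring_scope.

Section Defs.
Variable R : realType.

Definition gbinom (alpha : R) (k : nat) : R :=
  (\prod_(i < k) (alpha - i%:R)) / (k`!)%:R.

Definition gw (alpha : R) (k : nat) : R := (-1) ^+ k * gbinom alpha k.

Inductive pq_choice := PQ_1_0 | PQ_1_m1.

Definition wgt (s : pq_choice) (alpha : R) (k : nat) : R :=
  match s with
  | PQ_1_0 =>
      if k is k'.+1 then alpha / 2 * gw alpha k + (2 - alpha) / 2 * gw alpha k'
      else alpha / 2 * gw alpha 0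
  | PQ_1_m1 =>
      if k is k''.+2 then (2 + alpha) / 4 * gw alpha k + (2 - alpha) / 4 * gw alpha k''
      else (2 + alpha) / 4 * gw alpha k
  end.

Definition cconst (s : pq_choice) (alpha : R) : R :=
  match s with
  | PQ_1_0 => (7 * alpha - 3 * alpha ^+ 2) / 24
  | PQ_1_m1 => (alpha - 3 * alpha ^+ 2 + 12) / 24
  end.

Definition Amat (s : pq_choice) (alpha : R) (n : nat) : 'M[R]_n :=
  \matrix_(i < n, j < n) if (j <= i.+1)%N then wgt s alpha (i.+1 - j) else 0.

Definition tridiag (n : nat) : 'M[R]_n :=
  \matrix_(i < n, j < n)
    if i == j then -2 else if (i.+1 == j :> nat) || (j.+1 == i :> nat) then 1 else 0.

Definition Cmat (s : pq_choice) (alpha : R) (n : nat) : 'M[R]_n :=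
  1%:M + cconst s alpha *: tridiag n.

Definition Dmat (s : pq_choice) (alpha K1 K2 tau h : R) (n : nat) : 'M[R]_n :=
  (tau / (2 * powR h alpha)) *: (K1 *: Amat s alpha n + K2 *: (Amat s alpha n)^T).

Definition cmod (z : R[i]) : R := Num.sqrt (complex.Re z ^+ 2 + complex.Im z ^+ 2).

Local Open Scope classical_set_scope.
Definition spectral_radius (n : nat) (M : 'M[R]_n) : R :=
  sup [set r : R | exists2 lam : R[i],
          eigenvalue (map_mx (fun x : R => x%:C%C) M) lam & r = cmod lam].

End Defs.

(* Main.v *)
Require Import Defs.
From HB Require Import structures.
From mathcomp Require Import all_boot all_order all_algebra.
From mathcomp Require Import complex.
From mathcomp Require Import boolp classical_sets reals exp.
From mathcomp.algebra_tactics Require Import ring lra.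
From mathcomp Require Import zify.
Import Order.TTheory GRing.Theory Num.Theory.
Local Open Scope ring_scope.
Section W.
Variable R : realType.
Implicit Types (al be : R).

Lemma gw0 al : gw al 0 = 1.
Proof. by rewrite /gw /gbinom big_ord0 expr0 mul1r fact0 divr1. Qed.

Lemma gwS al k : gw al k.+1 = gw al k * (k%:R - al) / k.+1%:R.
Proof.
rewrite /gw /gbinom big_ord_recr /= factS natrM exprS.
have h1 : (k.+1%:R : R) != 0 by rewrite pnatr_eq0.
have h2 : ((k`!)%:R : R) != 0 by rewrite pnatr_eq0 -lt0n fact_gt0.
field. by rewrite addrC natr1 h1 h2.
Qed.

Lemma gw1 al : gw al 1 = - al.
Proof. by rewrite gwS gw0 mul1r sub0r divr1. Qed.

Lemma gw_shift al k : gw al k.+1 = - al / k.+1%:R * gw (al - 1) k.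
Proof.
elim: k => [|k IH]; first by rewrite gw1 gw0 mulr1 divr1.
rewrite gwS IH gwS.
have h1 : (k.+1%:R : R) != 0 by rewrite pnatr_eq0.
have h2 : (k.+2%:R : R) != 0 by rewrite pnatr_eq0.
rewrite -!natr1 in h1 h2 *. field.
rewrite h2 h1 /=. done.
Qed.

Lemma gw_pascal al k : gw al k.+1 = gw (al - 1) k.+1 - gw (al - 1) k.
Proof.
rewrite gw_shift gwS.
have h1 : (k.+1%:R : R) != 0 by rewrite pnatr_eq0.
rewrite -!natr1 in h1 *. field. done.
Qed.

Lemma gw_psum al M : \sum_(k < M.+1) gw al k = gw (al - 1) M.
Proof.
elim: M => [|M IH]; first by rewrite big_ord1 !gw0.
by rewrite big_ord_recr /= IH gw_pascal addrC subrK.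
Qed.

Lemma gw_le0 be k : 0 <= be -> be <= 1 -> (1 <= k)%N -> gw be k <= 0.
Proof.
move=> b0 b1; elim: k => [//|k IH] _.
case: k IH => [|k] IH; first by rewrite gw1 oppr_le0.
rewrite gwS -mulrA mulr_le0_ge0 //; first exact: IH.
apply: divr_ge0; last by [].
rewrite subr_ge0 (le_trans b1) // ler1n //.
Qed.

Lemma gw_ge0 al k : 1 <= al -> al <= 2 -> (2 <= k)%N -> 0 <= gw al k.
Proof.
move=> a1 a2; elim: k => [//|k IH] hk.
case: k IH hk => [//|k] IH hk.
case: k IH hk => [|k] IH hk.
  rewrite gwS gw1; apply: divr_ge0 => //; nra.
rewrite gwS -mulrA mulr_ge0 //; first exact: IH.
apply: divr_ge0; last by [].
rewrite subr_ge0 (le_trans a2) // ler_nat //.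
Qed.

Lemma gw2 al : gw al 2 = al * (al - 1) / 2.
Proof. rewrite gwS gw1; field; rewrite ?pnatr_eq0 //. Qed.

Lemma gw3 al : gw al 3 = al * (al - 1) * (2 - al) / 6.
Proof. rewrite gwS gw2; field; rewrite ?pnatr_eq0 //. Qed.

Lemma wsum10 al M : \sum_(k < M.+2) wgt PQ_1_0 al k =
  al / 2 * gw (al - 1) M.+1 + (2 - al) / 2 * gw (al - 1) M.
Proof.
elim: M => [|M IH].
  rewrite big_ord_recr big_ord1 /= gw1 !gw0 gw1; field; rewrite ?pnatr_eq0 //.
rewrite big_ord_recr /= IH (gw_pascal al M.+1) (gw_pascal al M); ring.
Qed.

Lemma wsumm1 al M : \sum_(k < M.+3) wgt PQ_1_m1 al k =
  (2 + al) / 4 * gw (al - 1) M.+2 + (2 - al) / 4 * gw (al - 1) M.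
Proof.
elim: M => [|M IH].
  rewrite !big_ord_recr big_ord0 /= !gw2 gw1 !gw0; field; rewrite ?pnatr_eq0 //.
rewrite big_ord_recr /= IH (gw_pascal al M.+2) (gw_pascal al M); ring.
Qed.

Lemma wsum_le0 s al M : 1 <= al -> al <= 2 -> (4 <= M)%N ->
  \sum_(k < M) wgt s al k <= 0.
Proof.
move=> a1 a2 hM.
have b0 : 0 <= al - 1 by lra.
have b1 : al - 1 <= 1 by lra.
case: s.
  case: M hM => [//|[//|M]] hM; rewrite wsum10.
  have h1 := @gw_le0 (al - 1) M.+1 b0 b1 isT.
  have h2 := @gw_le0 (al - 1) M b0 b1 (ltnW hM).
  have : 0 <= al / 2 by lra.  have : 0 <= (2 - al) / 2 by lra. nra.
case: M hM => [//|[//|[//|M]]] hM; rewrite wsumm1.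
have h1 := @gw_le0 (al - 1) M.+2 b0 b1 isT.
have h2 := @gw_le0 (al - 1) M b0 b1 hM.
have : 0 <= (2 + al) / 4 by lra.  have : 0 <= (2 - al) / 4 by lra. nra.
Qed.

Lemma wgt_ge0 s al k : 1 <= al -> al <= 2 -> (4 <= k)%N -> 0 <= wgt s al k.
Proof.
move=> a1 a2 hk; case: s; case: k hk => [//|[//|[//|k]]] hk /=.
  have h1 := @gw_ge0 al k.+3 a1 a2 isT.
  have h2 := @gw_ge0 al k.+2 a1 a2 isT. 
  have : 0 <= al / 2 by lra.  have : 0 <= (2 - al) / 2 by lra. nra.
have h1 := @gw_ge0 al k.+3 a1 a2 isT.
have h2 := @gw_ge0 al k.+1 a1 a2 hk.
have : 0 <= (2 + al) / 4 by lra.  have : 0 <= (2 - al) / 4 by lra. nra.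
Qed.

Lemma w10_facts al : 1 < al -> al <= 2 ->
  0 <= wgt PQ_1_0 al 3 /\ 0 < wgt PQ_1_0 al 0 + wgt PQ_1_0 al 2.
Proof.
move=> a1 a2; rewrite /= gw3 gw2 gw1 gw0; split.
  have -> : al / 2 * (al * (al - 1) * (2 - al) / 6) + (2 - al) / 2 * (al * (al - 1) / 2)
     = (al * (al - 1)) * ((2 - al) * (al + 3)) / 12 by field; rewrite ?pnatr_eq0.
  apply: divr_ge0 => //; apply: mulr_ge0; apply: mulr_ge0; lra.
have -> : al / 2 * 1 + (al / 2 * (al * (al - 1) / 2) + (2 - al) / 2 * - al)
     = (al * (al - 1)) * (al + 2) / 4 by field; rewrite ?pnatr_eq0.
apply: divr_gt0 => //; apply: mulr_gt0; first apply: mulr_gt0; lra.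
Qed.

Lemma wm1_facts al : 1 < al -> al <= 2 ->
  wgt PQ_1_m1 al 3 <= 0 /\
  0 < wgt PQ_1_m1 al 0 + wgt PQ_1_m1 al 2 + 4 * wgt PQ_1_m1 al 3.
Proof.
move=> a1 a2; rewrite /= gw3 gw2 gw1 gw0; split.
  have -> : (2 + al) / 4 * (al * (al - 1) * (2 - al) / 6) + (2 - al) / 4 * - al
     = - ((2 - al) * al) * (8 - al - al ^+ 2) / 24 by field; rewrite ?pnatr_eq0.
  rewrite mulNr mulNr oppr_le0; apply: divr_ge0 => //; apply: mulr_ge0;
    [apply: mulr_ge0|]; nra.
have -> : (2 + al) / 4 * 1 + ((2 + al) / 4 * (al * (al - 1) / 2) + (2 - al) / 4 * 1) +
   4 * ((2 + al) / 4 * (al * (al - 1) * (2 - al) / 6) + (2 - al) / 4 * - al)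
   = (al - 1) * ((2 + al) * al / 2 + 2 / 3 * ((4 - al ^+ 2) * al) + 4 * (al - 1)) / 4
   by field; rewrite ?pnatr_eq0.
apply: divr_gt0 => //; apply: mulr_gt0; first lra.
have : 0 < (2 + al) * al / 2 by apply: divr_gt0 => //; nra.
have : 0 <= (4 - al ^+ 2) * al by apply: mulr_ge0; nra.
nra.
Qed.
End W.

Section Q.
Variable R : realType.
Variable m : nat.
Variable x : 'I_m.+1 -> R.

Definition Y (k : nat) : R := if (2 <= k)%N && (k < m.+3)%N then x (inord (k - 2)%N) else 0.
Local Notation KK := (m.+4).+1.

Lemma Y0 : Y 0 = 0. Proof. by []. Qed.
Lemma Y1 : Y 1 = 0. Proof. by []. Qed.
Lemma Ybig k : (m.+3 <= k)%N -> Y k = 0.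
Proof. by move=> hk; rewrite /Y; case: ifP => // /andP[_]; rewrite ltnNge hk. Qed.
Lemma Yx (i : 'I_m.+1) : Y i.+2 = x i.
Proof. have h : (i.+2 < m.+3)%N := ltn_ord i. by rewrite /Y /= h subn2 /= inord_val. Qed.

Lemma sumY (G : nat -> R) :
  \sum_(0 <= k < KK) Y k * G k = \sum_(i < m.+1) x i * G i.+2.
Proof.
rewrite (@big_cat_nat _ _ _ 2 0 KK) // big_nat_recl // big_nat_recl // big_geq //.
rewrite /= Y0 Y1 !mul0r !add0r.
rewrite (@big_cat_nat _ _ _ m.+3 2 KK) //=; last by lia.
have -> : \sum_(m.+3 <= k < KK) Y k * G k = 0.
  by rewrite big_nat_cond big1 // => k /andP[/andP[hk _] _]; rewrite Ybig ?mul0r.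
rewrite addr0.
rewrite -{1}[2%N]add0n big_addn /= big_mkord.
by apply: eq_bigr => i _; rewrite addn2 Yx.
Qed.

Definition cf (h : nat -> R) (k l : nat) : R := if (l <= k.+1)%N then h (k.+1 - l)%N else 0.
Definition TQ (h : nat -> R) : R :=
  \sum_(i < m.+1) \sum_(j < m.+1) x i * cf h i j * x j.
Definition P (d : nat) : R := \sum_(0 <= k < KK) Y k * Y (k.+1 - d)%N.

Lemma inner (h : nat -> R) k : (k < KK)%N ->
  \sum_(0 <= l < KK) cf h k l * Y l = \sum_(0 <= d < KK.+1) h d * Y (k.+1 - d)%N.
Proof.
move=> hk.
rewrite [RHS](@big_cat_nat _ _ _ k.+2) //=. 
rewrite [X in _ = _ + X]big_nat_cond [X in _ = _ + X]big1 ?addr0; last first.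
  move=> d /andP[/andP[hd _] _].
  have -> : (k.+1 - d = 0)%N by lia.
  by rewrite Y0 mulr0.
have -> : \sum_(0 <= l < KK) cf h k l * Y l = \sum_(0 <= l < KK.+1) cf h k l * Y l.
  by rewrite [RHS]big_nat_recr //= Ybig ?mulr0 ?addr0 //; lia.
rewrite (@big_cat_nat _ _ _ k.+2) //=.
rewrite [X in _ + X = _]big_nat_cond [X in _ + X = _]big1 ?addr0; last first.
  move=> l /andP[/andP[hl _] _].
  by rewrite /cf ifF ?mul0r //; apply/negbTE; rewrite -ltnNge.
rewrite big_nat_rev /=; apply: eq_big_nat => l /andP[_ hl].
rewrite /cf add0n ifT; last by lia.
by congr (h _ * Y _); lia.
Qed.

Lemma TQ_P h : TQ h = \sum_(0 <= d < KK.+1) h d * P d.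
Proof.
rewrite /P.
under eq_bigr do rewrite mulr_sumr.
rewrite exchange_big /=.
have -> : \sum_(0 <= k < KK) \sum_(0 <= d < KK.+1) h d * (Y k * Y (k.+1 - d)%N)
   = \sum_(0 <= k < KK) Y k * (\sum_(0 <= l < KK) cf h k l * Y l).
  apply: eq_big_nat => k /andP[_ hk]; rewrite inner // mulr_sumr.
  by apply: eq_bigr => d _; ring.
rewrite sumY /TQ; apply: eq_bigr => i _.
have -> : \sum_(0 <= l < KK) cf h i.+2 l * Y l = \sum_(0 <= l < KK) Y l * cf h i.+2 l.
  by apply: eq_bigr => l _; rewrite mulrC.
rewrite sumY mulr_sumr; apply: eq_bigr => j _.
rewrite /cf; have -> : (j.+2 <= i.+3)%N = (j <= i.+1)%N by [].
by rewrite subSS (mulrC (x j)) mulrA.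
Qed.

Definition R0 := \sum_(0 <= k < KK) Y k ^+ 2.
Definition T1 := \sum_(0 <= k < KK) Y k * Y k.+1.
Definition T2 := \sum_(0 <= k < KK) Y k * Y k.+2.
Definition D1 := \sum_(0 <= k < KK) (Y k.+1 - Y k) ^+ 2.
Definition D2 := \sum_(0 <= k < KK) (Y k.+2 - Y k) ^+ 2.

Lemma shift (F : nat -> R) : F 0%N = F KK ->
  \sum_(0 <= k < KK) F k.+1 = \sum_(0 <= k < KK) F k.
Proof.
move=> h; have := big_nat_recl KK 0 (fun i => F i) (leq0n _) (op := +%R) (idx := 0).
rewrite big_nat_recr //= h; lra.
Qed.

Lemma YK0 : Y KK = 0. Proof. by apply: Ybig; lia. Qed.
Lemma YK1 : Y KK.+1 = 0. Proof. by apply: Ybig; lia. Qed.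
Lemma YK2 : Y (m.+4) = 0. Proof. by apply: Ybig; lia. Qed.

Lemma P0 : P 0 = T1.
Proof. by apply: eq_bigr => k _; rewrite subn0. Qed.

Lemma P1 : P 1 = R0.
Proof. by apply: eq_bigr => k _; rewrite subn1 /= expr2. Qed.

Lemma P2 : P 2 = T1.
Proof.
rewrite /P -(shift (fun k => Y k * Y (k.+1 - 2)%N)); last by rewrite Y0 mul0r ?YK0 ?YK1 ?mul0r.
by apply: eq_bigr => k _; rewrite subSS subn1 /= mulrC.
Qed.

Lemma P3 : P 3 = T2.
Proof.
rewrite /P -(shift (fun k => Y k * Y (k.+1 - 3)%N)); last by rewrite Y0 mul0r ?YK0 ?YK1 ?mul0r.
rewrite -(shift (fun k => Y k.+1 * Y (k.+2 - 3)%N)); last by rewrite Y1 mul0r ?YK0 ?YK1 ?mul0r.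
by apply: eq_bigr => k _; rewrite !subSS subn0 mulrC.
Qed.

Lemma sumsq_shift e : \sum_(0 <= k < KK) Y (k - e)%N ^+ 2 <= R0.
Proof.
elim: e => [|e IH]; first by rewrite le_eqVlt; apply/orP; left; apply/eqP; apply: eq_bigr => k _; rewrite subn0.
apply: le_trans IH.
rewrite big_nat_recl //= sub0n Y0 expr0n /= add0r.
rewrite [X in _ <= X]big_nat_recr //=.
under eq_bigr do rewrite subSS.
by rewrite lerDl sqr_ge0.
Qed.

Lemma Pd_le d : (1 <= d)%N -> P d <= R0.
Proof.
move=> hd.
have h := sumsq_shift d.-1.
have : P d <= (R0 + \sum_(0 <= k < KK) Y (k - d.-1)%N ^+ 2) / 2.
  rewrite /R0 -big_split /= mulr_suml; apply: ler_sum => k _.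
  have -> : (k.+1 - d = k - d.-1)%N by lia.
  have := sqr_ge0 (Y k - Y (k - d.-1)%N); lra.
lra.
Qed.

Lemma sq1 : \sum_(0 <= k < KK) Y k.+1 ^+ 2 = R0.
Proof. by rewrite (shift (fun k => Y k ^+ 2)) // Y0 ?YK0 ?YK1 expr0n. Qed.

Lemma sq2 : \sum_(0 <= k < KK) Y k.+2 ^+ 2 = R0.
Proof.
rewrite (shift (fun k => Y k.+1 ^+ 2)); first exact: sq1.
by rewrite Y1 ?YK0 ?YK1 expr0n.
Qed.

Lemma D1E : D1 = 2 * R0 - 2 * T1.
Proof.
have -> : D1 = \sum_(0 <= k < KK) Y k.+1 ^+ 2 + \sum_(0 <= k < KK) Y k ^+ 2
   - 2 * \sum_(0 <= k < KK) Y k * Y k.+1.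
  rewrite mulr_sumr -!big_split -sumrN -big_split /=; apply: eq_bigr => k _; ring.
rewrite sq1 /R0 /T1; ring.
Qed.

Lemma D2E : D2 = 2 * R0 - 2 * T2.
Proof.
have -> : D2 = \sum_(0 <= k < KK) Y k.+2 ^+ 2 + \sum_(0 <= k < KK) Y k ^+ 2
   - 2 * \sum_(0 <= k < KK) Y k * Y k.+2.
  rewrite mulr_sumr -!big_split -sumrN -big_split /=; apply: eq_bigr => k _; ring.
rewrite sq2 /R0 /T2; ring.
Qed.

Lemma D2_le : D2 <= 4 * D1.
Proof.
have e : \sum_(0 <= k < KK) (Y k.+2 - Y k.+1) ^+ 2 = D1.
  by rewrite (shift (fun k => (Y k.+1 - Y k) ^+ 2)) // Y0 Y1 ?YK0 ?YK1 subrr expr0n.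
have : D2 <= 2 * \sum_(0 <= k < KK) (Y k.+2 - Y k.+1) ^+ 2 + 2 * D1.
  rewrite /D1 !mulr_sumr -big_split /=; apply: ler_sum => k _.
  have := sqr_ge0 (Y k.+2 - 2 * Y k.+1 + Y k); nra.
rewrite e; lra.
Qed.

Lemma Spos : 0 <= \sum_(0 <= k < KK) (Y k.+1 + Y k) ^+ 2 /\
   \sum_(0 <= k < KK) (Y k.+1 + Y k) ^+ 2 = 2 * R0 + 2 * T1.
Proof.
split; first by apply: sumr_ge0 => k _; exact: sqr_ge0.
have -> : \sum_(0 <= k < KK) (Y k.+1 + Y k) ^+ 2 =
   \sum_(0 <= k < KK) Y k.+1 ^+ 2 + \sum_(0 <= k < KK) Y k ^+ 2
   + 2 * \sum_(0 <= k < KK) Y k * Y k.+1.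
  rewrite mulr_sumr -!big_split /=; apply: eq_bigr => k _; ring.
rewrite sq1 /R0 /T1; ring.
Qed.

Lemma zero_chain (c : R) :
  \sum_(0 <= k < KK) (Y k.+1 - c * Y k) ^+ 2 = 0 -> forall i, x i = 0.
Proof.
move=> /eqP; rewrite psumr_eq0; last by move=> k _; exact: sqr_ge0.
move=> /allP hall.
have hY : forall k, (k <= KK)%N -> Y k = 0.
  elim=> [|k IH] hk; first exact: Y0.
  have hk' : k \in index_iota 0 KK by rewrite mem_index_iota; lia.
  have := hall k hk'; rewrite sqrf_eq0 IH ?mulr0 ?subr0; last by lia.
  by move/eqP.
move=> i; rewrite -Yx; apply: hY; have := ltn_ord i; lia.
Qed.

Lemma TQ_split h : TQ h = h 0%N * T1 + h 1%N * R0 + h 2%N * T1 + h 3%N * T2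
   + \sum_(4 <= d < KK.+1) h d * P d.
Proof.
rewrite TQ_P (@big_cat_nat _ _ _ 4) //=.
have -> : \sum_(0 <= d < 4) h d * P d = h 0%N * P 0 + h 1%N * P 1 + h 2%N * P 2 + h 3%N * P 3.
  by rewrite !big_nat_recl //= big_geq //= addr0 !addrA.
by rewrite P0 P1 P2 P3.
Qed.

Lemma R0_ge0 : 0 <= R0. Proof. by apply: sumr_ge0 => k _; exact: sqr_ge0. Qed.
Lemma D2_ge0 : 0 <= D2. Proof. by apply: sumr_ge0 => k _; exact: sqr_ge0. Qed.
Lemma D1_gt0 : (exists i, x i != 0) -> 0 < D1.
Proof.
move=> [i hi]; rewrite lt_def; apply/andP; split; last first.
  by apply: sumr_ge0 => k _; exact: sqr_ge0.
apply/eqP => e; have := zero_chain 1; rewrite /D1 in e.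
under eq_bigr do rewrite mul1r. move=> /(_ e i) hx; by rewrite hx eqxx in hi.
Qed.

Lemma TQ_neg h : (forall d, (4 <= d)%N -> 0 <= h d) ->
  \sum_(0 <= d < KK.+1) h d <= 0 ->
  ((0 <= h 3%N /\ 0 < h 0%N + h 2%N) \/ (h 3%N <= 0 /\ 0 < h 0%N + h 2%N + 4 * h 3%N)) ->
  (exists i, x i != 0) -> TQ h < 0.
Proof.
move=> hpos hS hk hx.
have hD1 := D1_gt0 hx. have hR := R0_ge0. have hD2 := D2_ge0. have hD21 := D2_le.
have e1 := D1E. have e2 := D2E.
have hrest : \sum_(4 <= d < KK.+1) h d * P d <= (\sum_(4 <= d < KK.+1) h d) * R0.
  rewrite mulr_suml; apply: ler_sum_nat => d /andP[hd _].
  apply: ler_wpM2l; first exact: hpos.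
  apply: Pd_le; lia.
have hsum : \sum_(0 <= d < KK.+1) h d = h 0%N + h 1%N + h 2%N + h 3%N + \sum_(4 <= d < KK.+1) h d.
  rewrite (@big_cat_nat _ _ _ 4) //=.
  have -> : \sum_(0 <= d < 4) h d = h 0%N + h 1%N + h 2%N + h 3%N.
    by rewrite !big_nat_recl //= big_geq //= addr0 !addrA.
  by [].
rewrite TQ_split.
have hSR : (\sum_(0 <= d < KK.+1) h d) * R0 <= 0 by apply: mulr_le0_ge0.
rewrite hsum in hSR.
case: hk => [[h3 h02]|[h3 h02]].
  have : 0 <= h 3%N * D2 by apply: mulr_ge0.
  have : 0 < (h 0%N + h 2%N) * D1 by apply: mulr_gt0.
  nra.
have : 0 < (h 0%N + h 2%N + 4 * h 3%N) * D1 by apply: mulr_gt0.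
have : 0 <= - h 3%N * (4 * D1 - D2) by apply: mulr_ge0; lra.
nra.
Qed.

Definition tri (d : nat) : R := if d == 0%N then 1 else if d == 1%N then -2 else if d == 2%N then 1 else 0.

Lemma TQ_tri_pos (c : R) : 0 < c -> c <= 1/4 -> (exists i, x i != 0) ->
  0 < R0 + c * TQ tri.
Proof.
move=> c0 c1 hx.
have [hS0 hSE] := Spos.
have hS : 0 < \sum_(0 <= k < KK) (Y k.+1 + Y k) ^+ 2.
  rewrite lt_def hS0 andbT; apply/eqP => e.
  have := zero_chain (-1); under eq_bigr do rewrite mulN1r opprK.
  move=> /(_ e) hz; case: hx => i; by rewrite hz eqxx.
have hR := R0_ge0.
have -> : TQ tri = 2 * T1 - 2 * R0.
  rewrite TQ_split /tri /= big_nat_cond big1 ?addr0; last by move=> d /andP[/andP[hd _] _]; rewrite ifF ?ifF ?ifF ?mul0r //; apply/eqP; lia.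
  ring.
have : 0 <= (1 - 4 * c) * R0 by apply: mulr_ge0; lra.
have : 0 < c * \sum_(0 <= k < KK) (Y k.+1 + Y k) ^+ 2 by apply: mulr_gt0.
rewrite hSE. nra.
Qed.
End Q.
Arguments TQ {R m}.
Arguments R0 {R m}.
Arguments Y {R m}.
Arguments P {R m}.
Arguments tri {R}.

Section M.
Variable R : realType.
Variable m : nat.
Local Notation n := m.+1.

Definition qf (M : 'M[R]_n) (p : 'rV[R]_n) : R :=
  \sum_(i < n) \sum_(j < n) p 0 i * M i j * p 0 j.
Definition bf (M : 'M[R]_n) (a b : 'rV[R]_n) : R := (a *m M *m b^T) 0 0.

Lemma bfE M a b : bf M a b = \sum_(i < n) \sum_(j < n) a 0 i * M i j * b 0 j.
Proof.
rewrite /bf mxE; under eq_bigr do rewrite !mxE mulr_suml.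
rewrite exchange_big /=; apply: eq_bigr => i _; apply: eq_bigr => j _.
by [].
Qed.

Lemma bf_qf M p : bf M p p = qf M p. Proof. exact: bfE. Qed.

Lemma bfD M1 M2 a b : bf (M1 + M2) a b = bf M1 a b + bf M2 a b.
Proof. by rewrite /bf mulmxDr mulmxDl mxE. Qed.
Lemma bfB M1 M2 a b : bf (M1 - M2) a b = bf M1 a b - bf M2 a b.
Proof. by rewrite /bf mulmxBr mulmxBl !mxE. Qed.
Lemma bfZ c M a b : bf (c *: M) a b = c * bf M a b.
Proof. by rewrite /bf -scalemxAr -scalemxAl mxE. Qed.
Lemma bf_tr M a b : bf M^T a b = bf M b a.
Proof. rewrite !bfE exchange_big /=; apply: eq_bigr => i _; apply: eq_bigr => j _; rewrite mxE; ring. Qed.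

Lemma qf_sq p : qf 1%:M p = \sum_(i < n) p 0 i ^+ 2.
Proof.
apply: eq_bigr => i _; rewrite (bigD1 i) //= big1 ?addr0.
  by rewrite !mxE eqxx mulr1 expr2.
by move=> j hj; rewrite !mxE eq_sym (negbTE hj) mulr0 mul0r.
Qed.

Lemma qfA s al p : qf (Amat s al n) p = TQ (fun i => p 0 i) (wgt s al).
Proof. by apply: eq_bigr => i _; apply: eq_bigr => j _; rewrite mxE. Qed.

Lemma qfT p : qf (tridiag R n) p = TQ (fun i => p 0 i) tri.
Proof.
apply: eq_bigr => i _; apply: eq_bigr => j _; rewrite mxE /cf /tri.
congr (_ * _ * _).
case: (ltngtP i j) => hij.
- have hne : (i == j) = false by apply/negbTE; rewrite neq_ltn hij.
  rewrite hne.
  case: (eqVneq (i.+1) (j : nat)) => e.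
    rewrite /= ifT; last by lia.
    by have -> : (i.+1 - j = 0)%N by lia.
  have -> : (j.+1 == i :> nat) = false by apply/negbTE; lia.
  rewrite /= ifF //; apply/negbTE; lia.
- have hne : (i == j) = false by apply/negbTE; rewrite neq_ltn hij orbT.
  rewrite hne /=.
  have -> : (j <= i.+1)%N = true by lia.
  have -> : (i.+1 == j :> nat) = false by apply/negbTE; lia.
  case: (eqVneq (j.+1) (i : nat)) => e /=.
    by have -> : (i.+1 - j = 2)%N by lia.
  have h3 : (3 <= i.+1 - j)%N by lia.
  by case: (i.+1 - j)%N h3 => [|[|[|k]]].
- have -> : i = j by apply: val_inj.
  by rewrite eqxx leqnSn; have -> : (j.+1 - j = 1)%N by lia.
Qed.

Lemma R0E (x : 'I_n -> R) : R0 x = \sum_(i < n) x i ^+ 2.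
Proof.
rewrite /R0; under eq_bigr do rewrite expr2.
by rewrite sumY; apply: eq_bigr => i _; rewrite Yx expr2.
Qed.

Lemma rV_nz (p : 'rV[R]_n) : p != 0 -> exists i, p 0 i != 0.
Proof.
move=> hp; apply/existsP; apply: contraR hp; rewrite negb_exists => /forallP h.
by apply/eqP/rowP => i; rewrite mxE; apply/eqP; rewrite -[_ == _]negbK h.
Qed.
End M.
Arguments qf {R m}.
Arguments bf {R m}.

Section F.
Local Open Scope complex_scope.
Variable R : realType.
Variable m : nat.
Local Notation n := m.+1.
Local Notation toC := (fun x : R => x%:C%C).

Local Notation Re := (@complex.Re R).
Local Notation Im := (@complex.Im R).
Lemma ReD (z w : R[i]) : Re (z + w) = Re z + Re w. Proof. by case: z w => [a b] [c d]. Qed.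
Lemma ImD (z w : R[i]) : Im (z + w) = Im z + Im w. Proof. by case: z w => [a b] [c d]. Qed.
Lemma Re0 : Re (0 : R[i]) = 0. Proof. by []. Qed.
Lemma Im0 : Im (0 : R[i]) = 0. Proof. by []. Qed.
Lemma ReMr (z : R[i]) r : Re (z * r%:C) = Re z * r.
Proof. case: z => a b /=. ring. Qed.
Lemma ImMr (z : R[i]) r : Im (z * r%:C) = Im z * r.
Proof. case: z => a b /=. ring. Qed.
Lemma ReMl (l z : R[i]) : Re (l * z) = Re l * Re z - Im l * Im z.
Proof. by case: l z => a b [c d]. Qed.
Lemma ImMl (l z : R[i]) : Im (l * z) = Re l * Im z + Im l * Re z.
Proof. case: l z => a b [c d] /=. ring. Qed.

Lemma map_mxM_C (A B : 'M[R]_n) : map_mx toC (A *m B) = map_mx toC A *m map_mx toC B.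
Proof. exact: map_mxM. Qed.

Lemma ReMx (u : 'rV[R[i]]_n) (M : 'M[R]_n) j :
  Re ((u *m map_mx toC M) 0 j) = (map_mx Re u *m M) 0 j.
Proof.
rewrite !mxE (big_morph Re ReD Re0); apply: eq_bigr => k _.
by rewrite !mxE ReMr.
Qed.
Lemma ImMx (u : 'rV[R[i]]_n) (M : 'M[R]_n) j :
  Im ((u *m map_mx toC M) 0 j) = (map_mx Im u *m M) 0 j.
Proof.
rewrite !mxE (big_morph Im ImD Im0); apply: eq_bigr => k _.
by rewrite !mxE ImMr.
Qed.

Lemma bfE2 (M : 'M[R]_n) a b : bf M a b = \sum_j (a *m M) 0 j * b 0 j.
Proof. by rewrite /bf mxE; apply: eq_bigr => j _; rewrite [b^T _ _]mxE. Qed.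

Lemma qf0 (M : 'M[R]_n) : qf M 0 = 0.
Proof. rewrite /qf big1 // => i _; rewrite big1 // => j _. rewrite !mxE. by rewrite mul0r mul0r. Qed.

Lemma lin_bf (M M1 : 'M[R]_n) a a1 a2 b c1 c2 :
  (forall j, (a *m M) 0 j = c1 * (a1 *m M1) 0 j + c2 * (a2 *m M1) 0 j) ->
  bf M a b = c1 * bf M1 a1 b + c2 * bf M1 a2 b.
Proof.
move=> E; rewrite !bfE2 !mulr_sumr -big_split; apply: eq_bigr => j _.
by rewrite E /= mulrDl !mulrA.
Qed.
Arguments lin_bf {M M1 a a1 a2} b {c1 c2}.

Lemma unit_CD (C D : 'M[R]_n) :
  (forall p, p != 0 -> 0 < qf C p) -> (forall p, p != 0 -> qf D p < 0) ->
  (C - D) \in unitmx.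
Proof.
move=> hC hD; rewrite unitmxE unitfE; apply/negP => /det0P [v hv0 hv].
have : bf (C - D) v v = 0 by rewrite /bf hv mul0mx mxE.
rewrite bfB !bf_qf; have := hC v hv0; have := hD v hv0; lra.
Qed.

Lemma eig_lt1 (C D : 'M[R]_n) lam : C^T = C ->
  (forall p, p != 0 -> 0 < qf C p) -> (forall p, p != 0 -> qf D p < 0) ->
  eigenvalue (map_mx toC (invmx (C - D) *m (C + D))) lam ->
  Num.sqrt (Re lam ^+ 2 + Im lam ^+ 2) < 1.
Proof.
move=> hsym hC hD /eigenvalueP [v hv hv0].
have hU := @unit_CD C D hC hD.
pose u := v *m map_mx toC (invmx (C - D)).
have hvu : v = u *m map_mx toC (C - D).
  by rewrite /u -mulmxA -map_mxM mulVmx // map_mx1 mulmx1.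
have hu0 : u != 0 by apply: contraNneq hv0 => hu; rewrite hvu hu mul0mx.
have heq : u *m map_mx toC (C + D) = lam *: (u *m map_mx toC (C - D)).
  by rewrite -hvu -hv /u map_mxM mulmxA.
clearbody u.
pose p := map_mx Re u; pose q := map_mx Im u.
have E1 : forall j, (p *m (C + D)) 0 j =
    Re lam * (p *m (C - D)) 0 j + (- Im lam) * (q *m (C - D)) 0 j.
  move=> j; rewrite -ReMx heq mxE ReMl ReMx ImMx; ring.
have E2 : forall j, (q *m (C + D)) 0 j =
    Re lam * (q *m (C - D)) 0 j + Im lam * (p *m (C - D)) 0 j.
  move=> j; rewrite -ImMx heq mxE ImMl ReMx ImMx; ring.
have A1 := lin_bf p E1. have A2 := lin_bf q E2.
have A3 := lin_bf q E1. have A4 := lin_bf p E2.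
move: A1 A2 A3 A4; rewrite !bfB !bfD.
have sC : bf C q p = bf C p q by rewrite -{1}hsym bf_tr.
rewrite sC !bf_qf.
have hpq : p != 0 \/ q != 0.
  case: (eqVneq p 0) => hp; last by left.
  case: (eqVneq q 0) => hq; last by right.
  exfalso; move/negP: hu0; apply; apply/eqP/rowP => j.
  have := congr1 (fun M : 'rV[R]_n => M 0 j) hp; have := congr1 (fun M : 'rV[R]_n => M 0 j) hq.
  rewrite !mxE; case: (u 0 j) => a b /= -> ->; by [].
have Cge : forall r, 0 <= qf C r.
  by move=> r; case: (eqVneq r 0) => [->|hr]; [rewrite qf0 | exact/ltW/hC].
have Dle : forall r, qf D r <= 0.
  by move=> r; case: (eqVneq r 0) => [->|hr]; [rewrite qf0 | exact/ltW/hD].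
have hc : 0 < qf C p + qf C q.
  case: hpq => h; [have := hC p h; have := Cge q | have := hC q h; have := Cge p]; lra.
have hd : qf D p + qf D q < 0.
  case: hpq => h; [have := hD p h; have := Dle q | have := hD q h; have := Dle p]; lra.
set c := qf C p + qf C q in hc *; set dr := qf D p + qf D q in hd *.
set lr := Re lam; set li := Im lam.
move=> A1 A2 A3 A4.
have e1 : c + dr = lr * (c - dr) + li * (bf D q p - bf D p q).
  rewrite /c /dr; lra.
have e2 : bf D q p - bf D p q = - lr * (bf D q p - bf D p q) + li * (c - dr).
  rewrite /c /dr; lra.
set di := bf D q p - bf D p q in e1 e2.
have key : (c + dr) ^+ 2 + di ^+ 2 = (lr ^+ 2 + li ^+ 2) * ((c - dr) ^+ 2 + di ^+ 2).
  rewrite e1 [X in _ + X ^+ 2 = _]e2; ring.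
have hlt : (c + dr) ^+ 2 < (c - dr) ^+ 2 by nra.
have hZ : 0 < (c - dr) ^+ 2 + di ^+ 2 by have := sqr_ge0 di; nra.
have hL : lr ^+ 2 + li ^+ 2 < 1 by nra.
by rewrite -sqrtr1 ltr_sqrt // ltr01.
Qed.

Lemma sr_lt1 (M : 'M[R]_n) :
  (forall lam, eigenvalue (map_mx toC M) lam -> cmod lam < 1) -> spectral_radius M < 1.
Proof.
move=> hlt.
have [rs Drs] := closed_field_poly_normal (char_poly (map_mx toC M)).
have inrs : forall lam, eigenvalue (map_mx toC M) lam -> lam \in rs.
  move=> lam; rewrite eigenvalue_root_char Drs rootZ ?root_prod_XsubC //.
  by rewrite (monicP (char_poly_monic _)) oner_eq0.
have [B [hB1 hB]] : exists B, B < 1 /\ forall z, z \in rs ->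
    eigenvalue (map_mx toC M) z -> cmod z <= B.
  elim: (rs) => [|z rs' [B [hB1 hB]]]; first by exists 0; split => //; exact: ltr01.
  case: (boolP (eigenvalue (map_mx toC M) z)) => hz.
    exists (Num.max B (cmod z)); split; first by rewrite gt_max hB1 hlt.
    move=> w; rewrite inE => /orP[/eqP->|hw] hwz; first by rewrite le_max lexx orbT.
    by rewrite le_max hB.
  exists B; split => // w; rewrite inE => /orP[/eqP->|hw] hwz; last exact: hB.
  by rewrite hwz in hz.
rewrite /spectral_radius; set S := (X in sup X).
case: (pselect (exists lam, eigenvalue (map_mx toC M) lam)) => [[lam hlam]|hno].
  apply: le_lt_trans hB1; apply: ge_sup.
    by exists (cmod lam); exists lam.
  by move=> r [lam' hl ->]; apply: hB => //; exact: inrs.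
have -> : S = set0.
  by apply/seteqP; split => // r [lam hl _]; apply: hno; exists lam.
by rewrite sup0 ltr01.
Qed.
End F.

Section G.
Variable R : realType.
Variable m : nat.
Local Notation n := m.+1.

Lemma Cmat_sym s (al : R) : (Cmat s al n)^T = Cmat s al n.
Proof.
apply/matrixP => i j; rewrite !mxE eq_sym; congr (_ + _ * _).
by rewrite eq_sym orbC.
Qed.

Lemma Cpos s (al : R) (p : 'rV[R]_n) : 0 < cconst s al -> cconst s al <= 1/4 -> p != 0 ->
  0 < qf (Cmat s al n) p.
Proof.
move=> c0 c1 hp.
have h := @TQ_tri_pos R m (fun i => p 0 i) (cconst s al) c0 c1 (@rV_nz R m p hp).
rewrite R0E in h.
by rewrite -bf_qf /Cmat bfD bfZ !bf_qf qf_sq qfT.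
Qed.

Lemma Dneg s (al K1 K2 tau h : R) (p : 'rV[R]_n) :
  0 < tau / (2 * powR h al) -> 0 <= K1 -> 0 <= K2 -> 0 < K1 + K2 ->
  TQ (fun i => p 0 i) (wgt s al) < 0 ->
  qf (Dmat s al K1 K2 tau h n) p < 0.
Proof.
move=> g0 k1 k2 k12 hT.
rewrite -bf_qf /Dmat bfZ bfD !bfZ bf_tr !bf_qf qfA.
have -> : K1 * TQ (fun i => p 0 i) (wgt s al) + K2 * TQ (fun i => p 0 i) (wgt s al)
  = (K1 + K2) * TQ (fun i => p 0 i) (wgt s al) by ring.
by rewrite pmulr_rlt0 // pmulr_rlt0.
Qed.

Lemma alpha_gt1 s (al : R) : (match s with
   | PQ_1_0 => 1 < al
   | PQ_1_m1 => (1 + Num.sqrt 73) / 6 <= al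
   end) -> 1 < al.
Proof.
case: s => // h.
have s0 : 0 <= Num.sqrt (73 : R) := sqrtr_ge0 _.
have s2 : Num.sqrt (73 : R) ^+ 2 = 73 by rewrite sqr_sqrtr.
have : 5 < Num.sqrt (73 : R) by nra.
lra.
Qed.

Lemma cconst_facts s (al : R) : (match s with
   | PQ_1_0 => 1 < al
   | PQ_1_m1 => (1 + Num.sqrt 73) / 6 <= al
   end) -> al <= (2 : R) -> 0 < cconst s al /\ cconst s al <= 1/4.
Proof.
move=> hs a2; have a1 := @alpha_gt1 s al hs.
case: s hs => hs /=; split.
- have : 0 < al * (7 - 3 * al) by apply: mulr_gt0; lra.
  rewrite expr2; lra.
- rewrite expr2; nra.
- rewrite expr2; nra.
have s0 : 0 <= Num.sqrt (73 : R) := sqrtr_ge0 _.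
have s2 : Num.sqrt (73 : R) ^+ 2 = 73 by rewrite sqr_sqrtr.
have h6 : Num.sqrt (73 : R) <= 6 * al - 1 by lra.
have : 73 <= (6 * al - 1) ^+ 2.
  rewrite -s2; rewrite ler_sqr ?nnegrE //; lra.
rewrite !expr2; nra.
Qed.

Lemma wneg s (al : R) (x : 'I_n -> R) : 1 < al -> al <= 2 -> (exists i, x i != 0) ->
  TQ x (wgt s al) < 0.
Proof.
move=> a1 a2 hx.
apply: TQ_neg => //.
- move=> d hd; apply: wgt_ge0 => //; lra.
- rewrite big_mkord; apply: wsum_le0; [lra | lra | lia].
- case: s.
    by have [h3 h02] := @w10_facts R al a1 a2; left.
  by have [h3 h02] := @wm1_facts R al a1 a2; right.
Qed.
End G.


Theorem theorem1 (R : realType) (s : pq_choice) (alpha K1 K2 : R) :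
  (match s with
   | PQ_1_0 => 1 < alpha
   | PQ_1_m1 => (1 + Num.sqrt 73) / 6 <= alpha
   end) ->
  alpha <= 2 ->
  0 <= K1 -> 0 <= K2 -> K1 ^+ 2 + K2 ^+ 2 != 0 ->
  forall (a b tau : R) (N : nat),
    a < b -> 0 < tau -> (2 <= N)%N ->
    let h := (b - a) / N%:R in
    let Cm := Cmat s alpha N.-1 in
    let Dm := Dmat s alpha K1 K2 tau h N.-1 in
    (Cm - Dm) \in unitmx /\
    spectral_radius (invmx (Cm - Dm) *m (Cm + Dm)) < 1.
Proof.
move=> hs a2 k1 k2 k12 a b tau N hab htau hN.
case: N hN => [//|[//|m]] _ /=.
have a1 := @alpha_gt1 R s alpha hs.
have [c0 c1] := @cconst_facts R s alpha hs a2.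
have hK : 0 < K1 + K2.
  rewrite lt_def; apply/andP; split; last by lra.
  apply/eqP => e; have e1 : K1 = 0 by lra.
  have e2 : K2 = 0 by lra.
  by move: k12; rewrite e1 e2 expr2 mulr0 addr0 eqxx.
have hh : 0 < (b - a) / m.+2%:R by apply: divr_gt0; [lra | rewrite ltr0n].
have hg : 0 < tau / (2 * powR ((b - a) / m.+2%:R) alpha).
  apply: divr_gt0 => //; apply: mulr_gt0 => //; exact: powR_gt0.
have hC : forall p, p != 0 -> 0 < qf (Cmat s alpha m.+1) p.
  by move=> p hp; apply: Cpos.
have hD : forall p, p != 0 -> qf (Dmat s alpha K1 K2 tau ((b - a) / m.+2%:R) m.+1) p < 0.
  move=> p hp; apply: Dneg => //; apply: wneg => //; exact: rV_nz.
split; first exact: unit_CD hC hD.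
apply: sr_lt1 => lam hl; exact: (@eig_lt1 R m _ _ lam (@Cmat_sym R m s alpha) hC hD hl).
Qed.
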